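(* Let $A$ be an $n\times n$ Hermitian matrix ($n\ge2$) with eigenvalues $\lambda_1\ge\dots\ge\lambda_n$, and for $k=1,\dots,n$ let $\mu_{k,1}\ge\dots\ge\mu_{k,n-1}$ be the eigenvalues of $A_k$. Then for all $1\le\ell\le r\le n-1$, $$(r-\ell+1)\lambda_\ell+(n-1)\sum_{j=\ell}^r\lambda_{j+1}\le\sum_{k=1}^n\sum_{j=\ell}^r\mu_{k,j}\le(n-1)\sum_{j=\ell}^r\lambda_j+(r-\ell+1)\lambda_{r+1}.$$
   Context: For an $n\times n$ matrix $A$ and $k\in\{1,\dots,n\}$, $A_k$ denotes the $(n-1)\times(n-1)$ principal submatrix obtained by deleting the $k$-th row and $k$-th column of $A$. *)

(* Defs.v *)
From HB Require Import structures.
From mathcomp Require Import all_boot all_order all_algebra.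
Set Implicit Arguments. Unset Strict Implicit. Unset Printing Implicit Defensive.
Import Order.TTheory GRing.Theory Num.Theory.
Local Open Scope ring_scope.

(* A_k : principal submatrix of A : 'M_(n.+1) obtained by deleting row k and
   column k (here k is 0-based). *)
Definition principal_sub (C : numClosedFieldType) (n : nat)
  (A : 'M[C]_n.+1) (k : 'I_n.+1) : 'M[C]_n := row' k (col' k A).

Definition is_eigs (C : numClosedFieldType) (n : nat) (A : 'M[C]_n) (s : seq C) : Prop :=
  sorted (fun x y : C => y <= x) s /\
  char_poly A = \prod_(x <- s) ('X - x%:P).

(* Main.v *)
Require Import Defs.
From HB Require Import structures.
From mathcomp Require Import all_boot all_order all_algebra.
From mathcomp Require Import all_fingroup zify ring.
Import Order.TTheory GRing.Theory Num.Theory.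
Local Open Scope ring_scope.

Module Helpers.
Set Implicit Arguments. Unset Strict Implicit. Unset Printing Implicit Defensive.
Local Open Scope sesquilinear_scope.
Section Work.
Variable C : numClosedFieldType.
Lemma ct_mul m n p (A : 'M[C]_(m, n)) (B : 'M[C]_(n, p)) :
  (A *m B)^t* = B^t* *m A^t*.
Proof. by rewrite trmx_mul map_mxM. Qed.

Lemma diag_form p q (Y : 'M[C]_(p, q)) d (j : 'I_p) :
  (Y *m diag_mx d *m Y^t*) j j = \sum_i d 0 i * `|Y j i| ^+ 2.
Proof.
rewrite mul_mx_diag mxE; apply: eq_bigr => i _.
by rewrite !mxE normCK mulrAC mulrC mulrA.
Qed.

Lemma nrm_form p q (Y : 'M[C]_(p, q)) (j : 'I_p) :
  (Y *m Y^t*) j j = \sum_i `|Y j i| ^+ 2.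
Proof. by rewrite mxE; apply: eq_bigr => i _; rewrite !mxE normCK. Qed.

Lemma herm_ct n (A : 'M[C]_n) : A \is hermsymmx -> A^t* = A.
Proof. by move=> /is_hermitianmxP {2}->; rewrite expr0 scale1r. Qed.

Lemma ct_herm n (A : 'M[C]_n) : A^t* = A -> A \is hermsymmx.
Proof. by move=> h; apply/is_hermitianmxP; rewrite expr0 scale1r h. Qed.

Lemma mul_pid_entry p q (a : 'M[C]_(p, q)) r i j :
  (a *m pid_mx r) i j = if (j < r)%N then a i j else 0.
Proof.
rewrite mxE (bigD1 j) //= big1 ?addr0 => [|k kj]; rewrite !mxE.
  by rewrite eqxx /=; case: ifP; rewrite ?mulr1 ?mulr0.
by rewrite val_eqE (negPf kj) /= mulr0.
Qed.

Lemma mul_copid_entry p q (a : 'M[C]_(p, q)) r i j :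
  (a *m copid_mx r) i j = if (j < r)%N then 0 else a i j.
Proof.
rewrite /copid_mx mulmxBr mulmx1 2!mxE mul_pid_entry.
by case: ifP; rewrite ?subrr ?subr0.
Qed.


Lemma nrm_pos q (v : 'rV[C]_q) : v != 0 -> 0 < \sum_i `|v 0 i| ^+ 2.
Proof.
move=> v0; rewrite lt_def sumr_ge0 ?andbT => [|i _]; last exact: exprn_ge0.
apply/negP => /eqP/psumr_eq0P H0; apply/negP: v0; rewrite negbK.
apply/eqP/matrixP => i k; rewrite ord1 mxE.
by have /eqP := H0 (fun i _ => exprn_ge0 2 (normr_ge0 (v 0 i))) k isT; rewrite sqrf_eq0 normr_eq0 => /eqP.
Qed.

Lemma interlace N s (H U : 'M[C]_N) (h : 'rV[C]_N) (V : 'M[C]_(s, N))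
    (W : 'M[C]_s) (g : 'rV[C]_s) (j : nat) (js : (j < s)%N) (jN : (j < N)%N) :
  U \is unitarymx -> H = U^t* *m diag_mx h *m U ->
  (forall i k : 'I_N, (i <= k)%N -> h 0 k <= h 0 i) ->
  V \is unitarymx -> W \is unitarymx ->
  W *m (V *m H *m V^t*) *m W^t* = diag_mx g ->
  (forall i k : 'I_s, (i <= k)%N -> g 0 k <= g 0 i) ->
  g 0 (Ordinal js) <= h 0 (Ordinal jN).
Proof.
move=> Uu HE hs Vu Wu WG gs.
pose F := W *m V.
have Fu : F \is unitarymx by exact: mul_unitarymx.
have FH : F *m H *m F^t* = diag_mx g.
  by rewrite /F ct_mul -WG !mulmxA.
pose S := (pid_mx j.+1 : 'M_s) *m F.
pose T := copid_mx j *m U.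
have rkS : \rank S = j.+1.
  rewrite mxrankMfree; first by rewrite rank_pid_mx.
  by rewrite /row_free mxrank_unitary.
have rkT : \rank T = (N - j)%N.
  rewrite mxrankMfree; first by rewrite rank_copid_mx // ltnW.
  by rewrite /row_free mxrank_unitary.
have rkc : (0 < \rank (S :&: T))%N.
  have := mxrank_sum_cap S T; have := rank_leq_col (S + T)%MS.
  rewrite rkS rkT; move: jN; clear; lia.
have /rowV0Pn [v vc v0] : (S :&: T)%MS != 0 by rewrite -mxrank_eq0 -lt0n.
have /submxP [a va] : (v <= S)%MS by apply: submx_trans vc (capmxSl _ _).
have /submxP [b vb] : (v <= T)%MS by apply: submx_trans vc (capmxSr _ _).
pose a' := a *m (pid_mx j.+1 : 'M_s). pose b' := b *m copid_mx j.
have va' : v = a' *m F by rewrite va /a' /S mulmxA.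
have vb' : v = b' *m U by rewrite vb /b' /T mulmxA.
have Qa : (v *m H *m v^t*) 0 0 = \sum_i g 0 i * `|a' 0 i| ^+ 2.
  by rewrite -diag_form -FH va' ct_mul !mulmxA.
have Qb : (v *m H *m v^t*) 0 0 = \sum_i h 0 i * `|b' 0 i| ^+ 2.
  rewrite -diag_form vb' HE ct_mul !mulmxA.
  by rewrite -(mulmxA b') (unitarymxP Uu) mulmx1 -!(mulmxA _ U) (unitarymxP Uu) mulmx1.
have Na : (v *m v^t*) 0 0 = \sum_i `|a' 0 i| ^+ 2.
  by rewrite -nrm_form va' ct_mul mulmxA -(mulmxA _ F) (unitarymxP Fu) mulmx1.
have Nb : (v *m v^t*) 0 0 = \sum_i `|b' 0 i| ^+ 2.
  by rewrite -nrm_form vb' ct_mul !mulmxA -(mulmxA b') (unitarymxP Uu) mulmx1.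
have vpos : 0 < (v *m v^t*) 0 0 by rewrite nrm_form nrm_pos.
rewrite -(ler_pM2r vpos).
apply: (@le_trans _ _ ((v *m H *m v^t*) 0 0)).
  rewrite Qa Na mulr_sumr; apply: ler_sum => i _.
  rewrite /a' mul_pid_entry; case: ifP => ij; last by rewrite normr0 expr0n /= !mulr0.
  by rewrite ler_wpM2r ?exprn_ge0 // gs.
rewrite Qb Nb mulr_sumr; apply: ler_sum => i _.
rewrite /b' mul_copid_entry; case: ifP => ij; first by rewrite normr0 expr0n /= !mulr0.
by rewrite ler_wpM2r ?exprn_ge0 // hs //= leqNgt ij.
Qed.

Lemma perm_diag N (M : 'M[C]_N) (X : 'rV[C]_N) (s : seq C) :
  M \is unitarymx -> perm_eq s [seq X 0 i | i <- enum 'I_N] ->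
  exists2 U : 'M[C]_N, U \is unitarymx &
    M^t* *m diag_mx X *m M = U^t* *m diag_mx (\row_i s`_i) *m U.
Proof.
move=> Mu.
have -> : [seq X 0 i | i <- enum 'I_N] = [tuple X 0 i | i < N] by [].
case/tuple_permP => p sE.
pose P : 'M[C]_N := perm_mx p.
have Pu : P \is unitarymx.
  apply/unitarymxP; rewrite /P tr_perm_mx map_perm_mx -perm_mxM mulgV.
  by rewrite perm_mx1.
exists (P *m M); first exact: mul_unitarymx.
have D : diag_mx X = P^t* *m diag_mx (\row_i s`_i) *m P.
  have sk : forall k : 'I_N, s`_k = X 0 (p k).
    by move=> k; rewrite sE -tnth_nth !tnth_mktuple.
  apply/matrixP => i j; rewrite mul_mx_diag !mxE.
  rewrite (bigD1 (p^-1 i)%g) //= big1 ?addr0 => [|k kp]; rewrite !mxE.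
    by rewrite sk permKV eqxx conjC1 mul1r mulr_natr.
  have -> : (p k == i) = false.
    by apply/negbTE; apply: contra kp => /eqP <-; rewrite permK.
  by rewrite conjC0 !mul0r.
by rewrite D ct_mul !mulmxA.
Qed.


Lemma unitary_sq N (M : 'M[C]_N) : M \is unitarymx -> M^t* *m M = 1%:M.
Proof. by move/unitarymxP/mulmx1C. Qed.

Lemma char_poly_unitary N (M D : 'M[C]_N) : M \is unitarymx ->
  char_poly (M^t* *m D *m M) = char_poly D.
Proof.
move=> Mu; have MM := unitary_sq Mu.
rewrite /char_poly /char_poly_mx.
have -> : 'X%:M - map_mx polyC (M^t* *m D *m M) =
   map_mx polyC (M^t*) *m ('X%:M - map_mx polyC D) *m map_mx polyC M.
  rewrite mulmxBr mulmxBl !map_mxM -!mulmxA; congr (_ - _).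
  by rewrite -scalar_mxC mulmxA -map_mxM MM map_mx1 mul1mx.
rewrite !det_mulmx mulrAC -det_mulmx -map_mxM MM map_mx1 det1 mul1r.
by [].
Qed.

Lemma real_perm_sorted N (X : 'rV[C]_N) : X \is a realmx ->
  exists s : seq C, [/\ perm_eq s [seq X 0 i | i <- enum 'I_N],
     sorted (fun x y : C => y <= x) s & all (fun x => x \is Num.real) s].
Proof.
move=> /mxOverP Xr.
have allr : all (fun x => x \is Num.real) [seq X 0 i | i <- enum 'I_N].
  by apply/allP => x /mapP [i _ ->]; exact: Xr.
exists (sort (fun x y : C => y <= x) [seq X 0 i | i <- enum 'I_N]); split.
- by rewrite perm_sort.
- apply: (@sort_sorted_in _ (fun x => x \is Num.real)) => //.
  by move=> x y xr yr; rewrite /= orbC; apply: real_leVge.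
- by rewrite all_sort.
Qed.

Lemma herm_decomp_sorted N (H : 'M[C]_N) : H \is hermsymmx ->
  exists s : seq C, exists2 U : 'M[C]_N, U \is unitarymx &
    [/\ H = U^t* *m diag_mx (\row_i s`_i) *m U, size s = N &
        sorted (fun x y : C => y <= x) s].
Proof.
move=> Hh; have Hn := hermitian_normalmx Hh.
have HE := orthomx_spectralP Hn.
have Mu := spectral_unitarymx H.
have [s [sp ss _]] := real_perm_sorted (hermitian_spectral_diag_real Hh).
have [U Uu UE] := perm_diag Mu sp.
exists s, U => //; split => //.
- by rewrite {1}HE invmx_unitary // UE.
- by rewrite (perm_size sp) size_map size_enum_ord.
Qed.

Lemma eigs_decomp N (H : 'M[C]_N) s : H \is hermsymmx -> is_eigs H s ->
  size s = N /\ exists2 U : 'M[C]_N, U \is unitarymx &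
    H = U^t* *m diag_mx (\row_i s`_i) *m U.
Proof.
move=> Hh [ss cs]; have Hn := hermitian_normalmx Hh.
have HE := orthomx_spectralP Hn.
have Mu := spectral_unitarymx H.
set X := spectral_diag H in HE.
have HE' : H = (spectralmx H)^t* *m diag_mx X *m spectralmx H.
  by rewrite {1}HE invmx_unitary.
have sp : perm_eq s [seq X 0 i | i <- enum 'I_N].
  apply: prod_XsubC_eq; rewrite -cs HE' char_poly_unitary //.
  rewrite char_poly_trig ?diag_mx_is_trig // big_map big_enum /=.
  by apply: eq_bigr => i _; rewrite mxE eqxx mulr1n.
split; first by rewrite (perm_size sp) size_map size_enum_ord.
have [U Uu UE] := perm_diag Mu sp.
by exists U => //; rewrite HE' UE.
Qed.

Lemma sum_range (F : nat -> C) a b n : (b <= n)%N ->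
  \sum_(a <= j < b) F j = \sum_(i < n) (if (a <= i < b)%N then F i else 0).
Proof.
move=> bn; rewrite (big_nat_widenl _ _ _ _ _ (leq0n a)) (big_nat_widen _ _ _ _ _ bn).
rewrite big_mkcond big_mkord; apply: eq_bigr => i _.
by [].
Qed.

Lemma rearr n m (lam : seq C) (z : 'I_n -> C) l r :
  n = m.+1 ->
  (forall i k, (i <= k < n)%N -> lam`_k <= lam`_i) ->
  (forall i, 0 <= z i) -> (forall i, z i <= m%:R) ->
  (forall i : 'I_n, (r < i)%N -> z i = 0) ->
  \sum_i z i = (n * (r - l + 1))%:R ->
  (1 <= l)%N -> (l <= r)%N -> (r < n)%N ->
  (r - l + 1)%:R * lam`_(l.-1) + m%:R * \sum_(l <= j < r.+1) lam`_j
    <= \sum_(i : 'I_n) lam`_i * z i.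
Proof.
move=> nE ls z0 zm zr zs l1 lr rn.
pose w := fun i : 'I_n => z i - (if (l <= i < r.+1)%N then m%:R else 0).
have key : \sum_(i : 'I_n) lam`_i * z i - ((r - l + 1)%:R * lam`_(l.-1)
    + m%:R * \sum_(l <= j < r.+1) lam`_j) = \sum_(i : 'I_n) (lam`_i - lam`_(l.-1)) * w i.
  rewrite (sum_range _ _ rn) mulr_sumr.
  have -> : (r - l + 1)%:R * lam`_(l.-1) = \sum_(i : 'I_n) lam`_(l.-1) * w i.
    rewrite -mulr_sumr /w sumrB zs -(sum_range (fun _ => m%:R) _ rn).
    rewrite sumr_const_nat mulrC; congr (_ * _).
    rewrite -[m%:R *+ _]mulr_natl -natrM -natrB; last by rewrite nE; nia.
    by apply: congr1; rewrite nE; nia.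
  rewrite -big_split /= -sumrB; apply: eq_bigr => i _.
  rewrite /w; case: ifP => _; rewrite ?mulr0 ?subr0; ring.
rewrite -subr_ge0 key sumr_ge0 // => i _.
rewrite /w; case: (ltnP i l.-1) => [il|li].
  rewrite ifF; last by apply/negbTE; rewrite negb_and -ltnNge; apply/orP; left; lia.
  by rewrite subr0 mulr_ge0 ?z0 // subr_ge0 ls //; apply/andP; split; lia.
case: (ltnP r i) => [ri|ir].
  by rewrite zr // ifF ?subrr ?mulr0 //; apply/negbTE; rewrite negb_and; apply/orP; right; rewrite -leqNgt.
case: (eqVneq (i : nat) l.-1) => [il|il].
  by rewrite il subrr mul0r.
rewrite ifT; last by apply/andP; split; lia.
apply: mulr_le0; first by rewrite subr_le0 ls //; apply/andP; split; lia.
by rewrite subr_le0.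
Qed.

End Work.

Section Work2.
Variable C : numClosedFieldType.

Lemma col_nrm p q (Z : 'M[C]_(p, q)) i :
  (Z^t* *m Z) i i = \sum_j `|Z j i| ^+ 2.
Proof. by rewrite mxE; apply: eq_bigr => j _; rewrite !mxE normCK mulrC. Qed.

Lemma ct_sub p q (A B : 'M[C]_(p, q)) : (A - B)^t* = A^t* - B^t*.
Proof. by apply/matrixP => i j; rewrite !mxE rmorphB. Qed.

Lemma bessel p q t (Y : 'M[C]_(p, q)) (x : 'M[C]_(q, t)) i :
  Y \is unitarymx -> ((Y *m x)^t* *m (Y *m x)) i i <= (x^t* *m x) i i.
Proof.
move=> Yu; pose Z := x - Y^t* *m (Y *m x).
have ZZ : Z^t* *m Z = x^t* *m x - (Y *m x)^t* *m (Y *m x).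
  rewrite /Z ct_sub mulmxBl !mulmxBr !ct_mul trmxCK.
  rewrite !mulmxA -(mulmxA _ Y (Y^t*)) (unitarymxP Yu) mulmx1.
  by rewrite subrr subr0.
have e : forall M1 M2 : 'M[C]_t, (M1 - M2) i i = M1 i i - M2 i i.
  by move=> M1 M2; rewrite !mxE.
rewrite -subr_ge0 -e -ZZ col_nrm sumr_ge0 // => j _; exact: exprn_ge0.
Qed.

Definition delmx m (k : 'I_m.+1) : 'M[C]_(m, m.+1) :=
  \matrix_(i, j) ((lift k i == j)%:R).

Lemma delmx_mull m k p (B : 'M[C]_(m.+1, p)) i j :
  (delmx k *m B) i j = B (lift k i) j.
Proof.
rewrite mxE (bigD1 (lift k i)) //= big1 => [|t ti]; rewrite !mxE.
  by rewrite eqxx mul1r addr0.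
by rewrite eq_sym (negPf ti) mul0r.
Qed.

Lemma delmx_mulr m k p (B : 'M[C]_(p, m.+1)) i j :
  (B *m (delmx k)^t*) i j = B i (lift k j).
Proof.
rewrite mxE (bigD1 (lift k j)) //= big1 => [|t ti]; rewrite !mxE.
  by rewrite eqxx conjC1 mulr1 addr0.
by rewrite eq_sym (negPf ti) conjC0 mulr0.
Qed.

Lemma delmx_unitary m (k : 'I_m.+1) : (delmx k : 'M[C]_(m, m.+1)) \is unitarymx.
Proof.
apply/unitarymxP/matrixP => i j; rewrite delmx_mulr !mxE.
by rewrite (inj_eq (@lift_inj _ k)).
Qed.

Lemma principal_subE m (A : 'M[C]_m.+1) k :
  principal_sub A k = delmx k *m A *m (delmx k)^t*.
Proof.
by apply/matrixP => i j; rewrite delmx_mulr delmx_mull !mxE.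
Qed.

Lemma perk m (A U : 'M[C]_m.+1) (lam : seq C) (k : 'I_m.+1) (Uk : 'M[C]_m)
    (mu : seq C) l r :
  A \is hermsymmx -> U \is unitarymx -> A = U^t* *m diag_mx (\row_i lam`_i) *m U ->
  Uk \is unitarymx -> principal_sub A k = Uk^t* *m diag_mx (\row_i mu`_i) *m Uk ->
  (forall i j, (i <= j < m)%N -> mu`_j <= mu`_i) ->
  (1 <= l)%N -> (l <= r)%N -> (r <= m)%N ->
  exists z : 'rV[C]_m.+1,
   [/\ forall i, 0 <= z 0 i, forall i, z 0 i <= 1 - `|U i k| ^+ 2,
       forall i : 'I_m.+1, (r < i)%N -> z 0 i = 0,
       \sum_i z 0 i = (r - l + 1)%:R &
       \sum_(i < m.+1) lam`_i * z 0 i <= \sum_(l <= j < r.+1) mu`_(j.-1)].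
Proof.
move=> Ah Uu AE Uku AkE mus l1 lr rm.
pose E := delmx k : 'M[C]_(m, m.+1).
have Eu : E \is unitarymx := delmx_unitary k.
pose V := (pid_mx r.+1 : 'M[C]_m.+1) *m U.
have rkV : \rank V = r.+1.
  rewrite mxrankMfree; first by rewrite rank_pid_mx.
  by rewrite /row_free mxrank_unitary.
have rkE : \rank E = m by rewrite mxrank_unitary.
have rkc : (r <= \rank (V :&: E))%N.
  have := mxrank_sum_cap V E; have := rank_leq_col (V + E)%MS.
  rewrite rkV rkE; lia.
pose B := row_base (V :&: E)%MS.
pose B' := (pid_mx r : 'M[C]_(r, \rank (V :&: E))) *m B.
have B'free : row_free B'.
  by rewrite /row_free mxrankMfree ?row_base_free // rank_pid_mx.
pose Y0 := schmidt B'.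
have Y0u : Y0 \is unitarymx by apply: schmidt_unitarymx; lia.
have Y0c : (Y0 <= V :&: E)%MS.
  rewrite /Y0 (eqmx_schmidt_free B'free); apply: submx_trans (submxMl _ _) _.
  by rewrite eq_row_base.
have /submxP [c Y0E] : (Y0 <= E)%MS by apply: submx_trans Y0c (capmxSr _ _).
have /submxP [d Y0V] : (Y0 <= V)%MS by apply: submx_trans Y0c (capmxSl _ _).
have cu : c \is unitarymx.
  apply/unitarymxP; have := unitarymxP Y0u.
  by rewrite Y0E ct_mul mulmxA -(mulmxA c E) (unitarymxP Eu) mulmx1.
have Act : A^t* = A by apply: herm_ct.
have AkE' := principal_subE A k.
pose Ak := principal_sub A k.
have Akct : Ak^t* = Ak.
  by rewrite /Ak AkE' !ct_mul trmxCK Act mulmxA.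
pose G := c *m Ak *m c^t*.
have Gh : G \is hermsymmx.
  by apply: ct_herm; rewrite /G !ct_mul trmxCK Akct mulmxA.
have [gam [W Wu [GE gsz gsort]]] := herm_decomp_sorted Gh.
have WGW : W *m (c *m Ak *m c^t*) *m W^t* = diag_mx (\row_i gam`_i).
  rewrite -/G GE !mulmxA (unitarymxP Wu) mul1mx -mulmxA (unitarymxP Wu).
  by rewrite mulmx1.
have inter : forall j, (j < r)%N -> gam`_j <= mu`_j.
  move=> j jr.
  have jm : (j < m)%N by apply: leq_trans jr rm.
  have hs : forall i k' : 'I_m, (i <= k')%N ->
      (\row_i mu`_i) 0 k' <= (\row_i mu`_i) 0 i.
    by move=> i k' ik; rewrite !mxE mus // ik ltn_ord.
  have gs : forall i k' : 'I_r, (i <= k')%N ->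
      (\row_i gam`_i) 0 k' <= (\row_i gam`_i) 0 i.
    move=> i k' ik; rewrite !mxE.
    have leT_tr : transitive (fun x y : C => y <= x).
      by move=> a b c' h1 h2; exact: le_trans h2 h1.
    apply: (sorted_leq_nth leT_tr (fun x => lexx x) 0 gsort) => //;
      by rewrite inE gsz ltn_ord.
  have := interlace jr jm Uku AkE hs cu Wu WGW gs.
  by rewrite !mxE.
pose F := W *m Y0.
have Fu : F \is unitarymx by apply: mul_unitarymx.
pose P := F *m U^t*.
have FAF : F *m A *m F^t* = diag_mx (\row_i gam`_i).
  by rewrite /F Y0E !ct_mul -WGW /Ak AkE' !mulmxA.
have gamP : forall j : 'I_r, gam`_j = \sum_(i < m.+1) lam`_i * `|P j i| ^+ 2.
  move=> j; have h : (F *m A *m F^t*) j j = gam`_j.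
    by rewrite FAF mxE eqxx mulr1n mxE.
  rewrite -h.
  transitivity (\sum_(i < m.+1) (\row_i lam`_i) 0 i * `|P j i| ^+ 2);
    last by apply: eq_bigr => i _; rewrite mxE.
  by rewrite -diag_form /P [(F *m U^t*)^t*]ct_mul trmxCK {1}AE !mulmxA.
have Pz : forall (j : 'I_r) (i : 'I_m.+1), (r < i)%N -> P j i = 0.
  move=> j i ri.
  have -> : P = (W *m d) *m (pid_mx r.+1 : 'M[C]_m.+1).
    rewrite /P /F Y0V /V -!mulmxA (unitarymxP Uu) mulmx1.
    by [].
  by rewrite mul_pid_entry ltnNge ri.
have Prow : forall j : 'I_r, \sum_i `|P j i| ^+ 2 = 1.
  move=> j; rewrite -nrm_form /P ct_mul trmxCK !mulmxA.
  rewrite -(mulmxA F) (unitary_sq Uu) mulmx1 (unitarymxP Fu).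
  by rewrite mxE eqxx.
have Pcol : forall i : 'I_m.+1, \sum_j `|P j i| ^+ 2 <= 1 - `|U i k| ^+ 2.
  move=> i; rewrite -col_nrm.
  have -> : P = W *m (c *m (E *m U^t*)) by rewrite /P /F Y0E !mulmxA.
  rewrite ct_mul mulmxA -(mulmxA _ (W^t*)) (unitary_sq Wu) mulmx1.
  apply: le_trans (bessel _ _ cu) _.
  rewrite col_nrm.
  have e1 : forall j, `|(E *m U^t*) j i| ^+ 2 = `|U i (lift k j)| ^+ 2.
    by move=> j; rewrite delmx_mull !mxE norm_conjC.
  rewrite (eq_bigr _ (fun j _ => e1 j)).
  have : \sum_t `|U i t| ^+ 2 = 1 by rewrite -nrm_form (unitarymxP Uu) mxE eqxx.
  rewrite (bigD1_ord k) //= => <-.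
  by rewrite addrC addrK.
pose cond := fun j : nat => (l.-1 <= j < r)%N.
exists (\row_i \sum_(j < r) (if cond j then `|P j i| ^+ 2 else 0)); split.
- move=> i; rewrite mxE sumr_ge0 // => j _; case: ifP => // _; exact: exprn_ge0.
- move=> i; rewrite mxE; apply: le_trans (Pcol i); apply: ler_sum => j _.
  by case: ifP => // _; exact: exprn_ge0.
- move=> i ri; rewrite mxE big1 // => j _; rewrite Pz // normr0 expr0n /=.
  by case: ifP.
- rewrite (eq_bigr (fun i : 'I_m.+1 => \sum_(j < r) (if cond j then `|P j i| ^+ 2 else 0)));
    last by move=> i _; rewrite mxE.
  rewrite exchange_big /=.
  rewrite (eq_bigr (fun j : 'I_r => if cond j then 1 else 0)); last first.
    move=> j _; case: ifP => _; last by rewrite big1.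
    by rewrite Prow.
  rewrite -(sum_range (fun _ => 1) (l.-1) (leqnn r)) sumr_const_nat.
  by apply: congr1; lia.
- rewrite (eq_bigr (fun i : 'I_m.+1 => \sum_(j < r) (if cond j then lam`_i * `|P j i| ^+ 2 else 0)));
    last by move=> i _; rewrite mxE mulr_sumr; apply: eq_bigr => j _; case: ifP; rewrite ?mulr0.
  rewrite exchange_big /=.
  rewrite (eq_bigr (fun j : 'I_r => if cond j then gam`_j else 0)); last first.
    move=> j _; case: ifP => _; last by rewrite big1.
    by rewrite gamP.
  have -> : \sum_(l <= j < r.+1) mu`_(j.-1) = \sum_(l.-1 <= j < r) mu`_j.
    rewrite -{1}(prednK l1) big_add1 /=.
    by [].
  rewrite (sum_range _ _ (leqnn r)); apply: ler_sum => j _.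
  rewrite /cond; case: ifP => // /andP [_ jr].
  exact: inter.
Qed.

Lemma core m (A U : 'M[C]_m.+1) (lam : seq C) (Uk : 'I_m.+1 -> 'M[C]_m)
    (mu : 'I_m.+1 -> seq C) l r :
  A \is hermsymmx -> U \is unitarymx -> A = U^t* *m diag_mx (\row_i lam`_i) *m U ->
  (forall i j, (i <= j < m.+1)%N -> lam`_j <= lam`_i) ->
  (forall k, Uk k \is unitarymx) ->
  (forall k, principal_sub A k = (Uk k)^t* *m diag_mx (\row_i (mu k)`_i) *m Uk k) ->
  (forall k i j, (i <= j < m)%N -> (mu k)`_j <= (mu k)`_i) ->
  (1 <= l)%N -> (l <= r)%N -> (r <= m)%N ->
  (r - l + 1)%:R * lam`_(l.-1) + m%:R * \sum_(l <= j < r.+1) lam`_j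
    <= \sum_(k < m.+1) \sum_(l <= j < r.+1) (mu k)`_(j.-1).
Proof.
move=> Ah Uu AE ls Uku AkE mus l1 lr rm.
have : forall k : 'I_m.+1, exists z : 'rV[C]_m.+1,
   [/\ forall i, 0 <= z 0 i, forall i, z 0 i <= 1 - `|U i k| ^+ 2,
       forall i : 'I_m.+1, (r < i)%N -> z 0 i = 0,
       \sum_i z 0 i = (r - l + 1)%:R &
       \sum_(i < m.+1) lam`_i * z 0 i <= \sum_(l <= j < r.+1) (mu k)`_(j.-1)].
  by move=> k; apply: (perk Ah Uu AE (Uku k) (AkE k) (mus k) l1 lr rm).
case/fin_all_exists => zf zP.
pose z := fun i : 'I_m.+1 => \sum_k zf k 0 i.
have rn : (r < m.+1)%N by [].
apply: le_trans (rearr (z := z) (erefl m.+1) ls _ _ _ _ l1 lr rn) _.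
- move=> i; apply: sumr_ge0 => k _; by case: (zP k).
- move=> i; apply: (@le_trans _ _ (\sum_(k < m.+1) (1 - `|U i k| ^+ 2))).
    by apply: ler_sum => k _; case: (zP k) => _ h _ _ _; exact: h.
  rewrite sumrB -nrm_form (unitarymxP Uu) mxE eqxx sumr_const card_ord.
  by rewrite -mulr_natr mul1r mulr1n mulrSr addrK.
- move=> i ri; apply: big1 => k _; by case: (zP k) => _ _ h _ _; exact: h.
- rewrite /z exchange_big /= (eq_bigr (fun _ => (r - l + 1)%:R)); last first.
    by move=> k _; case: (zP k).
  by rewrite sumr_const card_ord -[_ *+ m.+1]mulr_natr -natrM mulnC.
- rewrite /z (eq_bigr (fun i : 'I_m.+1 => \sum_k lam`_i * zf k 0 i)); last first.
    by move=> i _; rewrite mulr_sumr.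
  rewrite exchange_big /=; apply: ler_sum => k _; by case: (zP k).
Qed.

Lemma seq_ord N (s : seq C) (f : C -> C) : size s = N ->
  [seq (\row_i f s`_i) 0 i | i <- enum 'I_N] = map f s.
Proof.
move=> sz; apply: (@eq_from_nth _ 0); first by rewrite !size_map -enumT size_enum_ord sz.
move=> i; rewrite size_map size_enum_ord => iN.
rewrite (nth_map (Ordinal iN)) ?size_enum_ord // mxE.
rewrite (nth_map 0) ?sz // nth_enum_ord //.
Qed.

Lemma neg_decomp N (H U : 'M[C]_N) (s : seq C) : U \is unitarymx -> size s = N ->
  H = U^t* *m diag_mx (\row_i s`_i) *m U ->
  exists2 U' : 'M[C]_N, U' \is unitarymx &
    - H = U'^t* *m diag_mx (\row_i (rev (map -%R s))`_i) *m U'.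
Proof.
move=> Uu sz HE.
have -> : - H = U^t* *m diag_mx (\row_i (- s`_i)) *m U.
  have -> : diag_mx (\row_i (- s`_i)) = - diag_mx (\row_i s`_i) :> 'M[C]_N.
    by apply/matrixP => i j; rewrite !mxE mulNrn.
  by rewrite HE mulmxN mulNmx.
apply: perm_diag => //; rewrite seq_ord //.
by rewrite perm_rev.
Qed.

Lemma nth_revN (s : seq C) i : (i < size s)%N ->
  (rev (map -%R s))`_i = - s`_(size s - i.+1).
Proof.
move=> iz; rewrite nth_rev ?size_map // (nth_map 0) ?size_map //.
by rewrite subnSK // leq_subr.
Qed.

Lemma sum_rev (F : nat -> C) a b c : (b <= c)%N ->
  \sum_(a <= j < b) F j = \sum_((c - b)%N <= j < (c - a)%N) F (c - j.+1)%N.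
Proof.
move=> bc; rewrite (sum_range _ _ bc) (sum_range _ _ (leq_subr a c)).
rewrite (reindex_inj rev_ord_inj) /=; apply: eq_bigr => i _.
have ic := ltn_ord i.
have -> : (a <= c - i.+1 < b)%N = (c - b <= i < c - a)%N.
  by apply/idP/idP => /andP [h1 h2]; apply/andP; split; lia.
by [].
Qed.

Lemma ct_opp p q (A : 'M[C]_(p, q)) : (- A)^t* = - A^t*.
Proof. by apply/matrixP => i j; rewrite !mxE rmorphN. Qed.

Lemma sorted_idx (s : seq C) : sorted (fun x y : C => y <= x) s ->
  forall i j, (i <= j < size s)%N -> s`_j <= s`_i.
Proof.
move=> ss i j /andP [ij js].
have leT_tr : transitive (fun x y : C => y <= x).
  by move=> a b c' h1 h2; exact: le_trans h2 h1.
apply: (sorted_leq_nth leT_tr (fun x => lexx x) 0 ss) => //; rewrite inE //.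
exact: leq_ltn_trans ij js.
Qed.

Lemma sorted_idx_neg (s : seq C) :
  (forall i j, (i <= j < size s)%N -> s`_j <= s`_i) ->
  forall i j, (i <= j < size (rev (map -%R s)))%N ->
    (rev (map -%R s))`_j <= (rev (map -%R s))`_i.
Proof.
rewrite size_rev size_map => h i j /andP [ij js].
have iz : (i < size s)%N by exact: leq_ltn_trans ij js.
rewrite (nth_revN iz) (nth_revN js) lerN2; apply: h.
apply/andP; split; lia.
Qed.

End Work2.


End Helpers.
Import Helpers.
Local Open Scope sesquilinear_scope.

Theorem theorem3p5 (C : numClosedFieldType) (m : nat) (A : 'M[C]_m.+1)
  (lam : seq C) (mu : 'I_m.+1 -> seq C) (l r : nat) :
  (1 <= m)%N ->
  A \is hermsymmx ->
  is_eigs A lam ->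
  (forall k : 'I_m.+1, is_eigs (principal_sub A k) (mu k)) ->
  (1 <= l)%N -> (l <= r)%N -> (r <= m)%N ->
  (r - l + 1)%:R * lam`_(l.-1) + m%:R * \sum_(l <= j < r.+1) lam`_j
    <= \sum_(k < m.+1) \sum_(l <= j < r.+1) (mu k)`_(j.-1)
  /\
  \sum_(k < m.+1) \sum_(l <= j < r.+1) (mu k)`_(j.-1)
    <= m%:R * \sum_(l <= j < r.+1) lam`_(j.-1) + (r - l + 1)%:R * lam`_r.
Proof.
move=> m1 Ah leig mueig l1 lr rm.
have [lsz [U Uu AE]] := eigs_decomp Ah leig.
have ls := sorted_idx leig.1; rewrite lsz in ls.
have Akh : forall k, principal_sub A k \is hermsymmx.
  move=> k; apply: ct_herm.
  by rewrite principal_subE !ct_mul trmxCK herm_ct // mulmxA.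
have : forall k, exists U' : 'M[C]_m, U' \is unitarymx /\
    principal_sub A k = U'^t* *m diag_mx (\row_i (mu k)`_i) *m U'.
  by move=> k; have [_ [U' ? ?]] := eigs_decomp (Akh k) (mueig k); exists U'.
case/fin_all_exists => Uk UkP.
have msz : forall k, size (mu k) = m by move=> k; case: (eigs_decomp (Akh k) (mueig k)).
have mus : forall k i j, (i <= j < m)%N -> (mu k)`_j <= (mu k)`_i.
  by move=> k; have := sorted_idx (mueig k).1; rewrite msz.
split.
  apply: (core Ah Uu AE ls (fun k => (UkP k).1) (fun k => (UkP k).2) mus l1 lr rm).
have [U' U'u nAE] := neg_decomp Uu lsz AE.
have nAh : - A \is hermsymmx.
  by apply: ct_herm; rewrite ct_opp herm_ct.
have psN : forall k, principal_sub (- A) k = - principal_sub A k.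
  by move=> k; apply/matrixP => i j; rewrite !mxE.
have : forall k, exists U'' : 'M[C]_m, U'' \is unitarymx /\
    principal_sub (- A) k =
      U''^t* *m diag_mx (\row_i (rev (map -%R (mu k)))`_i) *m U''.
  move=> k; have [Uk'' ? E''] := neg_decomp (UkP k).1 (msz k) (UkP k).2.
  by exists Uk''; rewrite psN.
case/fin_all_exists => Uk2 Uk2P.
have ls' : forall i j, (i <= j < m.+1)%N ->
    (rev (map -%R lam))`_j <= (rev (map -%R lam))`_i.
  by have := sorted_idx_neg (s := lam); rewrite size_rev size_map lsz; apply.
have mus' : forall k i j, (i <= j < m)%N ->
    (rev (map -%R (mu k)))`_j <= (rev (map -%R (mu k)))`_i.
  move=> k; have := sorted_idx_neg (s := mu k); rewrite size_rev size_map msz.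
  by move=> h; apply: h (mus k).
have l1' : (1 <= m.+1 - r)%N by lia.
have lr' : (m.+1 - r <= m.+1 - l)%N by lia.
have rm' : (m.+1 - l <= m)%N by lia.
have e1 : (m.+1 - l - (m.+1 - r) + 1 = r - l + 1)%N by lia.
have e2 : (rev (map -%R lam))`_((m.+1 - r).-1) = - lam`_r.
  rewrite nth_revN lsz; last by lia.
  by congr (- lam`_ _); lia.
have e3 : \sum_(m.+1 - r <= j < (m.+1 - l).+1) (rev (map -%R lam))`_j =
          - \sum_(l <= j < r.+1) lam`_(j.-1).
  rewrite (sum_rev _ l (c := m.+2)); last by lia.
  have -> : (m.+2 - r.+1)%N = (m.+1 - r)%N by lia.
  have -> : (m.+2 - l)%N = (m.+1 - l).+1 by lia.
  rewrite -sumrN; apply: eq_big_nat => j /andP [h1 h2].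
  rewrite nth_revN lsz; last by lia.
  by congr (- lam`_ _); lia.
have e4 : forall k : 'I_m.+1,
    \sum_(m.+1 - r <= j < (m.+1 - l).+1) (rev (map -%R (mu k)))`_(j.-1) =
    - \sum_(l <= j < r.+1) (mu k)`_(j.-1).
  move=> k; rewrite (sum_rev _ l (c := m.+2)); last by lia.
  have -> : (m.+2 - r.+1)%N = (m.+1 - r)%N by lia.
  have -> : (m.+2 - l)%N = (m.+1 - l).+1 by lia.
  rewrite -sumrN; apply: eq_big_nat => j /andP [h1 h2].
  rewrite nth_revN msz; last by lia.
  by congr (- (mu k)`_ _); lia.
have := core nAh U'u nAE ls' (fun k => (Uk2P k).1) (fun k => (Uk2P k).2) mus' l1' lr' rm'.
rewrite e1 e2 e3 (eq_bigr _ (fun k _ => e4 k)) sumrN !mulrN -opprD lerN2.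
by rewrite addrC.
Qed.
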